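(* Let $X$ be a finite discrete space with at least two elements, $\Gamma$ a nonempty countable set, $\varphi:\Gamma\to\Gamma$ any map, and $\sigma_\varphi:X^\Gamma\to X^\Gamma$ the generalized shift. Then each of the following is equivalent to ''$\varphi$ has at least one non-quasi-periodic point'': $(X^\Gamma,\sigma_\varphi)$ is $\omega^u_u$-chaotic; it is $\omega^u_\infty$-chaotic; it is $\omega^u_2$-chaotic; it is $\omega^\infty_\infty$-chaotic; it is $\omega^\infty_2$-chaotic.
   Context: $X^\Gamma$ carries the product topology (compact metrizable). The generalized shift is $\sigma_\varphi((x_\alpha)_{\alpha\in\Gamma})=(x_{\varphi(\alpha)})_{\alpha\in\Gamma}$. A point $\theta\in\Gamma$ is quasi-periodic for $\varphi$ if $\{\varphi^n(\theta):n\ge0\}$ is finite; otherwise it is non-quasi-periodic. For a continuous $f:Y\to Y$ on a compact metric space, $Per(f)$ is the set of periodic points, and for $a\in Y$, $\omega_f(a)$ is the set of $z\in Y$ such that $z=\lim_k f^{n_k}(a)$ for some strictly increasing sequence $(n_k)$ of natural numbers. Points $x,y$ are $\omega^u$-scrambled (resp. $\omega^\infty$-scrambled) if $\omega_f(x)\setminus\omega_f(y)$ is uncountable (resp. infinite), $\omega_f(x)\cap\omega_f(y)\neq\varnothing$, and $\omega_f(x)\setminus Per(f)\neq\varnothing$. A set with at least two elements is $\omega^u$- (resp. $\omega^\infty$-) scrambled if every pair of distinct points in it is. $f$ is $\omega^u_u$-, $\omega^u_\infty$-, $\omega^u_2$-chaotic if $Y$ has an uncountable, infinite, resp. at least two-element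 $\omega^u$-scrambled set; $f$ is $\omega^\infty_\infty$-, $\omega^\infty_2$-chaotic if $Y$ has an infinite, resp. at least two-element $\omega^\infty$-scrambled set. *)

(* Defs.v *)
From HB Require Import structures.
From mathcomp Require Import all_boot all_order all_algebra.
From mathcomp Require Import all_classical all_reals all_analysis.
Set Implicit Arguments. Unset Strict Implicit. Unset Printing Implicit Defensive.
Import Order.TTheory GRing.Theory Num.Theory.
Local Open Scope classical_set_scope.

Definition Per (Y : Type) (f : Y -> Y) : set Y :=
  [set y | exists n : nat, (0 < n)%N /\ iter n f y = y].

Definition omega_lim (Y : topologicalType) (f : Y -> Y) (a : Y) : set Y :=
  [set z | exists n : nat -> nat, (forall k, (n k < n k.+1)%N) /\
                                  (fun k => iter (n k) f a) @ \oo --> z].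

Definition omega_u_scrambled_pair (Y : topologicalType) (f : Y -> Y) (x y : Y) :=
  [/\ ~ countable (omega_lim f x `\` omega_lim f y),
      omega_lim f x `&` omega_lim f y !=set0 &
      omega_lim f x `\` Per f !=set0].

Definition omega_inf_scrambled_pair (Y : topologicalType) (f : Y -> Y) (x y : Y) :=
  [/\ infinite_set (omega_lim f x `\` omega_lim f y),
      omega_lim f x `&` omega_lim f y !=set0 &
      omega_lim f x `\` Per f !=set0].

Definition scrambled_set (Y : Type) (P : Y -> Y -> Prop) (S : set Y) :=
  (exists x y, [/\ S x, S y & x <> y]) /\
  (forall x y, S x -> S y -> x <> y -> P x y).

Definition omega_u_u_chaotic (Y : topologicalType) (f : Y -> Y) :=
  exists S : set Y, scrambled_set (omega_u_scrambled_pair f) S /\ ~ countable S.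
Definition omega_u_inf_chaotic (Y : topologicalType) (f : Y -> Y) :=
  exists S : set Y, scrambled_set (omega_u_scrambled_pair f) S /\ infinite_set S.
Definition omega_u_2_chaotic (Y : topologicalType) (f : Y -> Y) :=
  exists S : set Y, scrambled_set (omega_u_scrambled_pair f) S.
Definition omega_inf_inf_chaotic (Y : topologicalType) (f : Y -> Y) :=
  exists S : set Y, scrambled_set (omega_inf_scrambled_pair f) S /\ infinite_set S.
Definition omega_inf_2_chaotic (Y : topologicalType) (f : Y -> Y) :=
  exists S : set Y, scrambled_set (omega_inf_scrambled_pair f) S.

Definition quasi_periodic (G : Type) (phi : G -> G) (theta : G) :=
  finite_set (range (fun n : nat => iter n phi theta)).

Definition gen_shift_space (X : finType) (G : Type) :=
  {ptws G -> discrete_topology X}.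

Definition gen_shift (X : finType) (G : Type) (phi : G -> G)
  (x : gen_shift_space X G) : gen_shift_space X G :=
  fun a => x (phi a).

(* Main.v *)
Require Import Defs.
From HB Require Import structures.
From mathcomp Require Import all_boot all_order all_algebra.
From mathcomp Require Import all_classical all_reals all_analysis.
From mathcomp Require Import zify.
Local Open Scope classical_set_scope.
Set Implicit Arguments. Unset Strict Implicit.

Section S.
Context {X : finType} {G : countType} (phi : G -> G).

Lemma dcvg (v : nat -> discrete_topology X) (a : discrete_topology X) :
  v @ \oo --> a <-> exists M, forall k, (M <= k)%N -> v k = a.
Proof.
rewrite discrete_cvg; split.
  by move=> [M _ HM]; exists M => k Hk; exact: HM.
by move=> [M HM]; exists M => // k /= Hk; exact: HM.
Qed.

Lemma ptcvg (u : nat -> gen_shift_space X G) (z : gen_shift_space X G) :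
  u @ \oo --> z <-> forall g, exists M, forall k, (M <= k)%N -> u k g = z g.
Proof.
have H := @pointwise_cvgP (discrete_topology G) (discrete_topology X) (u @ \oo) z.
split => [Hc g|Hg].
  by apply/dcvg; exact: (proj1 (H _) Hc g).
by apply/(proj2 (H _)) => g; exact/dcvg.
Qed.

Lemma iter_shift n (x : gen_shift_space X G) g :
  iter n (gen_shift phi) x g = x (iter n phi g).
Proof.
elim: n x g => [//|n IH] x g.
by rewrite iterSr IH /gen_shift -iterS.
Qed.

Definition ap (x z : gen_shift_space X G) :=
  forall (F : seq G) N, exists2 n, (N <= n)%N &
    forall g, g \in F -> x (iter n phi g) = z g.

Lemma incr_ge (n : nat -> nat) : (forall k, (n k < n k.+1)%N) -> forall k, (k <= n k)%N.
Proof.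
move=> Hn; elim => [//|k IH]; exact: leq_ltn_trans IH (Hn k).
Qed.

Lemma incr_mono (n : nat -> nat) : (forall k, (n k < n k.+1)%N) ->
  forall k l, (k <= l)%N -> (n k <= n l)%N.
Proof.
move=> Hn k l /subnK <-; elim: (l - k)%N => [//|d IH].
rewrite addSn; exact: leq_trans IH (ltnW (Hn _)).
Qed.

Lemma omega_ap x z : omega_lim (gen_shift phi) x z <-> ap x z.
Proof.
split.
  move=> [n [Hn /ptcvg Hc]] F N.
  have [M HM] : exists M, forall k, (M <= k)%N -> forall g, g \in F ->
      x (iter (n k) phi g) = z g.
    elim: F => [|g F [M HM]]; first by exists 0%N.
    have [M' HM'] := Hc g.
    exists (maxn M M') => k Hk h; rewrite inE => /orP [/eqP ->|hF].
      by rewrite -iter_shift; apply: HM'; apply: leq_trans Hk; exact: leq_maxr.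
    by apply: HM => //; apply: leq_trans Hk; exact: leq_maxl.
  exists (n (maxn M N)).
    exact: leq_trans (leq_maxr M N) (incr_ge Hn _).
  by apply: HM; exact: leq_maxl.
move=> Hap.
pose Fk k := pmap (@unpickle G) (iota 0 k).
have sel : forall (F : seq G) (N : nat), {n | (N <= n)%N /\ forall g, g \in F -> x (iter n phi g) = z g}.
  move=> F N; apply: cid; have [n Hn1 Hn2] := Hap F N; by exists n.
pose nn := fix nn k := proj1_sig (sel (Fk k) (if k is k'.+1 then (nn k').+1 else 0%N)).
exists nn; split.
  move=> k; rewrite [nn k.+1]/=; by case: (proj2_sig (sel (Fk k.+1) (nn k).+1)).
apply/ptcvg => g; exists (pickle g).+1 => k Hk.
rewrite iter_shift.
have Hg : g \in Fk k.
  rewrite /Fk mem_pmap; apply/mapP; exists (pickle g); last by rewrite pickleK.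
  by rewrite mem_iota.
case: k Hk Hg => [//|k] Hk Hg.
rewrite [nn k.+1]/=; case: (proj2_sig (sel (Fk k.+1) (nn k).+1)) => _; exact.
Qed.

End S.

Section S2.
Context {X : finType} {G : countType} (phi : G -> G).

Lemma qp_evper th : quasi_periodic phi th ->
  exists m p, (0 < p)%N /\ forall n, (m <= n)%N -> iter (n + p) phi th = iter n phi th.
Proof.
move=> /finite_range_cst_subsequence [v [A infA HA]].
have [k1 Ak1] := infinite_setN0 infA.
have [k2 [Ak2 nk]] := infinite_setN0 (infinite_setD infA (finite_set1 k1)).
have E : iter k1 phi th = iter k2 phi th.
  by rewrite (proj1 (HA _) Ak1) (proj1 (HA _) Ak2).
have key : forall i j, (i < j)%N -> iter i phi th = iter j phi th ->
    exists m p, (0 < p)%N /\ forall n, (m <= n)%N -> iter (n + p) phi th = iter n phi th.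
  move=> i j ij Eij; exists i, (j - i)%N; split; first by rewrite subn_gt0.
  move=> n Hn.
  have -> : (n + (j - i) = (n - i) + j)%N by lia.
  by rewrite iterD -Eij -iterD subnK.
case: (ltngtP k1 k2) => [lt|lt|eq]; first exact: key lt E.
  exact: key lt (esym E).
by exfalso; apply: nk; rewrite eq.
Qed.

Lemma per_mul th m p : (forall n, (m <= n)%N -> iter (n + p) phi th = iter n phi th) ->
  forall j n, (m <= n)%N -> iter (n + j * p) phi th = iter n phi th.
Proof.
move=> H; elim => [|j IH] n Hn; first by rewrite mul0n addn0.
have -> : (n + j.+1 * p = (n + j * p) + p)%N by rewrite mulSn; lia.
rewrite H ?IH //; exact: leq_trans Hn (leq_addr _ _).
Qed.

Lemma qp_seq (F : seq G) : (forall th, quasi_periodic phi th) ->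
  exists M P, (0 < P)%N /\ forall g, g \in F -> forall n k, (M <= n)%N ->
    iter (n + k * P) phi g = iter n phi g.
Proof.
move=> Hq; elim: F => [|g F [M [P [P0 HP]]]]; first by exists 0%N, 1%N.
have [m [p [p0 Hp]]] := qp_evper (Hq g).
exists (maxn m M), (p * P)%N; split; first by rewrite muln_gt0 p0.
move=> h; rewrite inE => /orP [/eqP ->|hF] n k Hn.
  rewrite mulnCA mulnC; apply: per_mul Hp _ _ _.
  exact: leq_trans (leq_maxl _ _) Hn.
rewrite mulnA; apply: HP => //; exact: leq_trans (leq_maxr _ _) Hn.
Qed.

Lemma qp_cong (F : seq G) M P : (0 < P)%N -> (forall g, g \in F -> forall n k, (M <= n)%N ->
    iter (n + k * P) phi g = iter n phi g) ->
  forall a b g, g \in F -> (M <= a)%N -> (M <= b)%N -> a = b %[mod P] ->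
  iter a phi g = iter b phi g.
Proof.
move=> P0 HP.
have main : forall a b g, g \in F -> (M <= a)%N -> (a <= b)%N -> a = b %[mod P] ->
    iter a phi g = iter b phi g.
  move=> a b g gF Ma ab /eqP; rewrite eq_sym eqn_mod_dvd // => /divnK E.
  by rewrite -(subnKC ab) -E HP.
move=> a b g gF Ma Mb E; case: (leqP a b) => ab; first exact: main.
by apply/esym/main => //; exact: ltnW.
Qed.

Variable (x y w : gen_shift_space X G).

Lemma ap_trans u : ap phi y w -> ap phi w u -> ap phi y u.
Proof.
move=> Hyw Hwu F N.
have [a Na Ha] := Hwu F N.
have [b _ Hb] := Hyw (map (iter a phi) F) 0%N.
exists (b + a)%N; first exact: leq_trans Na (leq_addl _ _).
move=> g gF; rewrite iterD Hb ?Ha //; exact: map_f.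
Qed.

Lemma ap_qp u : (forall th, quasi_periodic phi th) ->
  ap phi x w -> ap phi x u -> ap phi w u.
Proof.
move=> Hq Hxw Hxu F N.
have [M [P [P0 HP]]] := qp_seq F Hq.
have [l Ml Hl] := Hxu F M.
pose R := (P * maxn N M)%N.
pose F' := [seq iter j phi g | g <- F, j <- iota R P].
have [n Mn Hn] := Hxw F' M.
pose r := (R + (l + (P - 1) * n) %% P)%N.
have NR : (N <= R)%N.
  apply: leq_trans (leq_maxl N M) _; exact: leq_pmull.
exists r; first exact: leq_trans NR (leq_addr _ _).
move=> g gF.
have rF : iter r phi g \in F'.
  apply: (allpairs_f (fun g j => iter j phi g)) => //.
  rewrite mem_iota leq_addr /= ltn_add2l; exact: ltn_pmod.
rewrite -Hn // -iterD -Hl //.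
congr (x _); apply: (qp_cong P0 HP) => //.

  exact: leq_trans Mn (leq_addr _ _).
rewrite /r addnA modnDmr.
have -> : (n + R + (l + (P - 1) * n) = P * (n + maxn N M) + l)%N.
  rewrite /R; case: P P0 {HP R NR F' Hn rF r} => [//|P] _; rewrite subSS subn0. nia.
by rewrite mulnC modnMDl.
Qed.

End S2.

Lemma rev_dir {X : finType} {G : countType} (phi : G -> G) :
  (forall th, quasi_periodic phi th) -> ~ omega_inf_2_chaotic (@gen_shift X G phi).
Proof.
move=> Hq [S [[x [y [Sx Sy xy]]] HS]].
have [infD [w [wx wy]] _] := HS x y Sx Sy xy.
apply: infD.
suff -> : omega_lim (gen_shift phi) x `\` omega_lim (gen_shift phi) y = set0 by exact: finite_set0.
apply/seteqP; split => // u [ux uy]; apply: uy.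
move/omega_ap: ux => ux; move/omega_ap: wx => wx; move/omega_ap: wy => wy.
apply/omega_ap; apply: ap_trans wy _; exact: ap_qp Hq wx ux.
Qed.

Section Fwd.
Context {X : finType} {G : countType} (phi : G -> G).
Variables (e0 e1 : X) (ne01 : e0 != e1) (th : G) (nqp : ~ quasi_periodic phi th).

Definition b2X (b : bool) : X := if b then e1 else e0.
Lemma b2X_inj : injective b2X.
Proof.
by case; case => //= E; move: ne01; rewrite E eqxx.
Qed.

Local Notation a n := (iter n phi th).

Lemma orbit_inj : injective (fun n => a n).
Proof.
have key : forall i j, (i < j)%N -> a i = a j -> False.
  move=> i j ij Eij; apply: nqp.
  have per : forall n, (i <= n)%N -> a (n + (j - i)) = a n.
    move=> n Hn; have -> : (n + (j - i) = (n - i) + j)%N by lia.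
    by rewrite iterD -Eij -iterD subnK.
  have red : forall n, exists2 k, (k < j)%N & a n = a k.
    elim/ltn_ind => n IH; case: (ltnP n j) => nj; first by exists n.
    have [k kj Ek] := IH (n - (j - i))%N ltac:(lia).
    exists k => //; rewrite -Ek -(per (n - (j - i))%N); [congr (iter _ phi th); lia | lia].
  apply: (sub_finite_set (B := [set a k | k in `I_j])).
    by move=> _ [n _ <-]; have [k kj Ek] := red n; exists k.
  apply: finite_image; exact: finite_II.
move=> i j /= E; case: (ltngtP i j) => [lt|lt|//].
  by case: (key _ _ lt E).
by case: (key _ _ lt (esym E)).
Qed.

Definition wit (g : G) : option (nat * nat) :=
  match pselect (exists p : nat * nat, iter p.2 phi g = a p.1) with
  | left H => Some (projT1 (cid H))
  | right _ => None
  end.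

Definition hv (c : nat -> bool) (g : G) : bool :=
  if wit g is Some p then (if (p.2 <= p.1)%N then c (p.1 - p.2)%N else false) else false.

Lemma hv_spec c g i j : iter j phi g = a i ->
  hv c g = (if (j <= i)%N then c (i - j)%N else false).
Proof.
move=> Eg; rewrite /hv /wit; case: pselect => [H|nH]; last first.
  by exfalso; apply: nH; exists (i, j).
case: (cid H) => [[i' j']] /= Hp.
have E : (j' + i = j + i')%N.
  apply: orbit_inj => /=.
  by rewrite !iterD -Eg -Hp -!iterD addnC.
case: ifP => h1; case: ifP => h2; try lia; try done.
congr c; lia.
Qed.

Lemma hv_none c g : ~ (exists i j, iter j phi g = a i) -> hv c g = false.
Proof.
move=> nH; rewrite /hv /wit; case: pselect => [H|//].
by exfalso; apply: nH; case: (cid H) => [[i j]] /= Hp; exists i, j.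
Qed.

Lemma hv_a c k : hv c (a k) = c k.
Proof. by rewrite (@hv_spec c (a k) k 0) // subn0. Qed.

Definition xx (c : nat -> bool) : gen_shift_space X G := fun g => b2X (hv c g).

Definition LP (c d : nat -> bool) := forall K N, exists n,
  [/\ (N <= n)%N, (K <= n)%N, (forall h, (h <= K)%N -> c (n + h)%N = d h) &
      (forall h, (0 < h <= K)%N -> c (n - h)%N = false)].

Lemma LP_ap c d : LP c d -> ap phi (xx c) (xx d).
Proof.
move=> HL F N.
have [K HK] : exists K, forall g, g \in F -> (exists i j, iter j phi g = a i) ->
    exists i j, [/\ iter j phi g = a i, (i <= K)%N & (j <= K)%N].
  elim: F => [|g F [K HK]]; first by exists 0%N.
  case: (pselect (exists i j, iter j phi g = a i)) => [[i [j Eg]]|nE].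
    exists (maxn K (maxn i j)) => h; rewrite inE => /orP [/eqP -> _|hF /(HK h hF) [i' [j' [E' Hi Hj]]]].
      exists i, j; split => //; lia.
    exists i', j'; split => //; lia.
  exists K => h; rewrite inE => /orP [/eqP -> //|hF]; exact: HK.
have [n [Nn Kn Hp Hn]] := HL K N.
exists n => // g gF.
rewrite /xx; congr b2X.
case: (pselect (exists i j, iter j phi g = a i)) => [Ex|nE].
  have [i [j [Eg iK jK]]] := HK g gF Ex.
  have Eg' : iter j phi (iter n phi g) = a (n + i).
    by rewrite -iterD addnC iterD Eg -iterD.
  rewrite (hv_spec c Eg') (hv_spec d Eg).
  case: ifP => h1; last lia.
  case: ifP => h2.
    have -> : (n + i - j = n + (i - j))%N by lia.
    by apply: Hp; lia.
  have -> : (n + i - j = n - (j - i))%N by lia.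
  by apply: Hn; lia.
rewrite (hv_none d nE) hv_none // => -[i [j Eg]]; apply: nE; exists i, (j + n)%N.
by rewrite iterD.
Qed.

Lemma ap_neg c z K : ap phi (xx c) z ->
  exists n, forall h, (h <= K)%N -> b2X (c (n + h)%N) = z (a h).
Proof.
move=> H; have [n _ Hn] := H (map (fun h => a h) (iota 0 K.+1)) 0%N.
exists n => h hK; rewrite -Hn; last by apply: (map_f (fun h => a h)); rewrite mem_iota.
by rewrite /xx -iterD hv_a.
Qed.

Lemma xx_a d k : xx d (a k) = b2X (d k).
Proof. by rewrite /xx hv_a. Qed.

End Fwd.

Section Words.

Definition W (K m : nat) (u : seq bool) (r : nat) : bool :=
  if (r <= K)%N then false else if (r <= K + m)%N then true
  else if r == (K + m).+1 then false
  else if odd (r - (K + m).+2) then false else nth false u (r - (K + m).+2)./2.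

Definition D (m : nat) (f : nat -> bool) (h : nat) : bool :=
  if h == 0%N then false else if (h <= m)%N then true
  else if h == m.+1 then false
  else if odd (h - m.+2) then false else f (h - m.+2)./2.

Definition wlen K m (u : seq bool) := (K + m + 2 + 2 * size u)%N.

Lemma W_len K m u r : (wlen K m u <= r)%N -> W K m u r = false.
Proof.
rewrite /wlen /W => H.
case: ifP => // _; case: ifP => [h|_]; first lia.
case: ifP => // _; case: ifP => // _.
apply: nth_default.
have : (2 * size u <= r - (K + m).+2)%N by lia.
by move=> H2; rewrite -divn2 leq_divRL //; lia.
Qed.

Lemma W_le K m u r : (r <= K)%N -> W K m u r = false.
Proof. by rewrite /W => ->. Qed.

Lemma W_in K m u r : (K < r <= K + m)%N -> W K m u r = true.
Proof. by rewrite /W => /andP [h1 h2]; rewrite leqNgt h1 h2. Qed.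

Lemma W_Km1 K m u : W K m u (K + m).+1 = false.
Proof. by rewrite /W; case: ifP => // _; rewrite ltnn eqxx. Qed.

Lemma W_true K m u r : W K m u r = true ->
  (K < r <= K + m)%N \/ ((K + m).+2 <= r /\ ~~ odd (r - (K + m).+2))%N.
Proof.
rewrite /W; case: ifP => // h1; case: ifP => [h2 _|h2]; first by left; lia.
case: ifP => // h3; case: ifP => // h4 _; right; split; [lia | by rewrite ?h4].
Qed.

Lemma W_run K m u r m' : (0 < m')%N -> W K m u r = false ->
  (forall j, (0 < j <= m')%N -> W K m u (r + j) = true) ->
  W K m u (r + m'.+1) = false -> m' = m \/ m' = 1%N.
Proof.
move=> m0 Wr Wj Wend.
have W1 := Wj 1%N ltac:(lia).
case: (W_true W1) => [h|[h1 h2]].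
  have rK : r = K.
    case: (leqP r K) => rK; first lia.
    by move: Wr; rewrite W_in //; lia.
  subst r; left; case: (ltngtP m' m) => // c.
    by move: Wend; rewrite W_in //; lia.
  have := Wj m.+1 ltac:(lia); by rewrite addnS W_Km1.
case: (ltngtP m' 1) => [c|c|->]; [lia| |by right].
have W2 := Wj 2%N ltac:(lia).
case: (W_true W2) => [h|[h3 h4]]; first lia.
move: h4; have -> : (r + 2 - (K + m).+2 = (r + 1 - (K + m).+2).+1)%N by lia.
by rewrite /= h2.
Qed.

Lemma W_D K m f K' h : (h <= K')%N -> W K m (mkseq f K') (K + h) = D m f h.
Proof.
move=> hK; rewrite /W /D.
case: (posnP h) => [->|h0]; first by rewrite addn0 leqnn.
have -> : (K + h <= K)%N = false by lia.
have -> : (K + h <= K + m)%N = (h <= m)%N by rewrite leq_add2l.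
have -> : (K + h == (K + m).+1) = (h == m.+1) by rewrite -addnS eqn_add2l.
have -> : (K + h - (K + m).+2 = h - m.+2)%N by lia.
case: ifP => // _; case: ifP => // _; case: ifP => // _.
rewrite nth_mkseq // -divn2 ltn_divLR //; lia.
Qed.

Definition mk (i : nat) (b : bool) : nat := (4 * i + 2 * b + 2)%N.

Lemma mk_inj i b i' b' : mk i b = mk i' b' -> i = i' /\ b = b'.
Proof. by rewrite /mk; case: b; case: b' => /= E; split => //; lia. Qed.

Variable t : nat -> bool.

Definition mlen (e : option nat) : nat := if e is Some i then mk i (t i) else 1%N.

Definition dec (k : nat) : nat * option nat * seq bool :=
  if @unpickle (nat * (nat * option nat * seq bool))%type k is Some p then p.2
  else (0%N, None, [::]).

Definition CW (k r : nat) : bool :=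
  let: (K, e, u) := dec k in
  if (wlen K (mlen e) u <= 2 ^ k)%N then W K (mlen e) u r else false.

Definition cs (n : nat) : bool :=
  CW (trunc_log 2 n) (n - 2 ^ trunc_log 2 n).

Lemma cs_chunk k n : (2 ^ k <= n < 2 ^ k.+1)%N -> cs n = CW k (n - 2 ^ k).
Proof. by move=> H; rewrite /cs (trunc_log_eq (isT : (1 < 2)%N) H). Qed.

Lemma CW0 k : CW k 0 = false.
Proof. by rewrite /CW; case: (dec k) => [[K e] u]; case: ifP => // _; rewrite W_le. Qed.

Lemma CW_big k r : (2 ^ k <= r)%N -> CW k r = false.
Proof.
rewrite /CW; case: (dec k) => [[K e] u] H; case: ifP => // fits.
apply: W_len; exact: leq_trans fits H.
Qed.

Lemma cs_pow k : cs (2 ^ k) = false.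
Proof.
rewrite (@cs_chunk k) ?subnn ?CW0 //.
by rewrite leqnn /= ltn_exp2l.
Qed.

Lemma unbounded_inj (f : nat -> nat) : injective f -> forall N, exists j, (N <= f j)%N.
Proof.
move=> finj N; case: (pselect (exists j, (N <= f j)%N)) => // nE; exfalso.
have H : forall j, (f j < N)%N.
  by move=> j; rewrite ltnNge; apply/negP => Hj; apply: nE; exists j.
pose g (i : 'I_N.+1) : 'I_N := Ordinal (H i).
have ginj : injective g.
  by move=> i1 i2 /(congr1 val) /= /finj /val_inj.
by have := leq_card g ginj; rewrite !card_ord ltnn.
Qed.

Lemma dec_inf tau N : exists k, (N <= k)%N /\ dec k = tau.
Proof.
have inj : injective (fun j : nat => pickle (j, tau)).
  by move=> j1 j2 /(pcan_inj pickleK) [].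
have [j Hj] := unbounded_inj inj N.
by exists (pickle (j, tau)); split => //; rewrite /dec pickleK.
Qed.

Definition LPn (c d : nat -> bool) := forall K N, exists n,
  [/\ (N <= n)%N, (K <= n)%N, (forall h, (h <= K)%N -> c (n + h)%N = d h) &
      (forall h, (0 < h <= K)%N -> c (n - h)%N = false)].

Lemma LP_gen K0 e u K N : exists n,
  [/\ (N <= n)%N, (K <= n)%N, (forall h, (h + K <= wlen K0 (mlen e) u)%N -> cs (n + h)%N = W K0 (mlen e) u (K + h)) &
      (forall h, (h <= K)%N -> cs (n - h)%N = W K0 (mlen e) u (K - h))].
Proof.
set L := wlen K0 (mlen e) u.
have [k [Hk Ek]] := dec_inf (K0, e, u) (N + K + L).
have kk : (k < 2 ^ k)%N := ltn_expl _ (isT : (1 < 2)%N).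
have fits : (L <= 2 ^ k)%N by lia.
have CWk : forall r, CW k r = W K0 (mlen e) u r.
  by move=> r; rewrite /CW Ek fits.
have e2 : (2 ^ k.+1 = 2 ^ k + 2 ^ k)%N by rewrite expnS; lia.
exists (2 ^ k + K)%N; split; [lia|lia| |].
  move=> h hL; case: (ltnP (K + h) (2 ^ k)) => kh.
    rewrite (@cs_chunk k) -?CWk; first by congr CW; lia.
    lia.
  rewrite W_len; last by lia.
  by rewrite (@cs_chunk k.+1) ?CW_big ?CW0 //; lia.
move=> h hK; rewrite (@cs_chunk k) -?CWk; first by congr CW; lia.
lia.
Qed.

Lemma LP_pat e f : LPn cs (D (mlen e) f).
Proof.
move=> K N; have [n [Nn Kn Hp Hn]] := LP_gen K e (mkseq f K) K N.
exists n; split => //.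
  move=> h hK; rewrite Hp; first exact: W_D.
  rewrite /wlen size_mkseq; lia.
move=> h hK; rewrite Hn ?W_le //; lia.
Qed.

Lemma LP_zero : LPn cs (fun _ => false).
Proof.
move=> K N; have [n [Nn Kn Hp Hn]] := LP_gen (K + K) None [::] K N.
exists n; split => //.
  move=> h hK; rewrite Hp ?W_le //; rewrite /wlen; lia.
move=> h hK; rewrite Hn ?W_le //; lia.
Qed.

Lemma cs_run p m' : (0 < m')%N -> cs p = false ->
  (forall j, (0 < j <= m')%N -> cs (p + j) = true) -> cs (p + m'.+1) = false ->
  m' = 1%N \/ exists i, m' = mk i (t i).
Proof.
move=> m0 cp cj cend.
set k := trunc_log 2 p.+1.
have k1 : (2 ^ k <= p.+1)%N by apply: trunc_logP.
have k2 : (p.+1 < 2 ^ k.+1)%N by apply: trunc_log_ltn.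
have kp : (2 ^ k <= p)%N.
  case: (ltngtP (2 ^ k) p.+1) => // E; first by lia.
  by move: (cj 1%N ltac:(lia)); rewrite addn1 -E cs_pow.
have e2 : (2 ^ k.+1 = 2 ^ k + 2 ^ k)%N by rewrite expnS; lia.
have inb : forall j, (j <= m')%N -> (p + j < 2 ^ k.+1)%N.
  elim => [|j IH] jm; first by lia.
  have := IH (ltnW jm); rewrite leq_eqVlt => /orP [/eqP E|]; last by rewrite addnS.
  by move: (cj j.+1 ltac:(lia)); rewrite addnS E cs_pow.
set r := (p - 2 ^ k)%N.
have cr : forall j, (j <= m')%N -> cs (p + j) = CW k (r + j).
  move=> j jm; rewrite (@cs_chunk k); first by congr CW; lia.
  by have := inb j jm; lia.
have cE : CW k (r + m'.+1) = false.
  have := inb m' (leqnn _); rewrite leq_eqVlt => /orP [/eqP E|lt].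
    by apply: CW_big; lia.
  rewrite -cend (@cs_chunk k); first by congr CW; lia.
  lia.
have c1 : CW k (r + 1) = true by rewrite -cr ?cj //; lia.
move: cE c1 cr cj (cr 0%N (leq0n _)).
rewrite /CW; case: (dec k) => [[K e] u]; case: ifP => // _ cE c1 cr cj c0.
have Wr : W K (mlen e) u r = false by rewrite -[r]addn0 -c0 addn0.
have := W_run m0 Wr _ cE.
case.
  by move=> j hj; rewrite -cr ?cj //; lia.
  by rewrite /mlen => ->; case: e {cE c1 cr cj c0 Wr} => [i|]; [right; exists i|left].
by move=> ->; left.
Qed.

End Words.

Lemma D0 m f : D m f 0 = false.
Proof. by []. Qed.

Lemma Din m f j : (0 < j <= m)%N -> D m f j = true.
Proof. by rewrite /D => /andP [h1 h2]; rewrite h2; case: j h1 {h2}. Qed.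

Lemma Dend m f : D m f m.+1 = false.
Proof. by rewrite /D ltnn eqxx. Qed.

Lemma Dbit m f j : D m f (m.+2 + j.*2) = f j.
Proof.
rewrite /D; have -> : (m.+2 + j.*2 == 0%N) = false by [].
have -> : (m.+2 + j.*2 <= m)%N = false by lia.
have -> : (m.+2 + j.*2 == m.+1) = false by lia.
by rewrite addKn odd_double doubleK.
Qed.

Lemma Ddelta h : (1 < h)%N -> D 1 (fun _ => false) h = false.
Proof.
rewrite /D => h1; case: ifP => // _; case: ifP => [h2|_]; first lia.
by case: ifP => // _; case: ifP.
Qed.

Lemma nb_uncount : ~ countable [set: nat -> bool].
Proof.
move/countable_injP => [f finj].
pose g n : nat -> bool :=
  if pselect (exists t, f t = n) is left H then projT1 (cid H) else (fun _ => false).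
pose d n := ~~ g n n.
have Hd : g (f d) = d.
  rewrite /g; case: pselect => [H|nH]; last by exfalso; apply: nH; exists d.
  case: (cid H) => t /= Ht; apply: finj => //; exact: in_setT.
have : g (f d) (f d) = ~~ g (f d) (f d) by rewrite {1}Hd.
by case: (g (f d) (f d)).
Qed.

Lemma uncount_img (Y : Type) (A : set Y) (h : (nat -> bool) -> Y) :
  injective h -> (forall f, A (h f)) -> ~ countable A.
Proof.
move=> hinj hA /countable_injP [f finj]; apply: nb_uncount.
apply/countable_injP; exists (f \o h) => x y _ _ /= E; apply: hinj.
by apply: finj => //; apply/mem_set; exact: hA.
Qed.

Section Main.
Context {X : finType} {G : countType} (phi : G -> G).
Variables (e0 e1 : X) (ne01 : e0 != e1) (th : G) (nqp : ~ quasi_periodic phi th).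

Local Notation s := (@gen_shift X G phi).
Local Notation xt t := (xx phi e0 e1 th (cs t)).
Local Notation a n := (iter n phi th).

Lemma om_LP t d : LPn (cs t) d -> omega_lim s (xt t) (xx phi e0 e1 th d).
Proof. by move=> H; apply/omega_ap; apply: (LP_ap ne01 nqp). Qed.

Lemma not_om t t' i f : t i != t' i -> ~ omega_lim s (xt t') (xx phi e0 e1 th (D (mk i (t i)) f)).
Proof.
move=> ne /omega_ap H.
set m := mk i (t i).
have [n Hn] := ap_neg ne01 nqp m.+1 H.
have Hc : forall h, (h <= m.+1)%N -> cs t' (n + h) = D m f h.
  by move=> h hm; apply: (b2X_inj ne01); rewrite Hn // (xx_a ne01 nqp).
have m0 : (0 < m)%N by rewrite /m /mk; lia.
have := @cs_run t' n m m0.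
rewrite -{1}[n]addn0 Hc // => /(_ erefl).
case.
- by move=> j hj; rewrite Hc ?Din //; lia.
- by rewrite Hc // Dend.
- by rewrite /m /mk; case: (t i) => /=; lia.
- move=> [i' E]; have [ii tt] := mk_inj E.
  by move: ne; rewrite tt ii eqxx.
Qed.

Lemma not_per : ~ Per s (xx phi e0 e1 th (D 1 (fun _ => false))).
Proof.
move=> [n [n0 E]].
have E2 : iter n s (xx phi e0 e1 th (D 1 (fun _ => false))) (a 1%N) =
  xx phi e0 e1 th (D 1 (fun _ => false)) (a 1%N) by rewrite E.
move: E2.
rewrite iter_shift -iterD !(xx_a ne01 nqp) Ddelta; last lia.
by move/(b2X_inj ne01).
Qed.

Lemma fwd : omega_u_u_chaotic s.
Proof.
pose h := fun t => xt t.
have diff : forall t t' i, t i != t' i -> forall f,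
    (omega_lim s (xt t) `\` omega_lim s (xt t')) (xx phi e0 e1 th (D (mk i (t i)) f)).
  move=> t t' i ne f; split; last exact: not_om.
  exact: (om_LP (LP_pat t (Some i) f)).
have hinj : injective h.
  move=> t t' E; apply/funext => i; apply/eqP; apply/negPn/negP => ne.
  have [H1 H2] := diff t t' i ne (fun _ => false).
  by apply: H2; rewrite /h in E; rewrite -E.
exists (range h); split; last by apply: (uncount_img hinj) => t; exists t.
split.
  exists (h (fun _ => false)), (h (fun _ => true)); split; [by exists (fun _ => false)|by exists (fun _ => true)|].
  by move/hinj => E; have := congr1 (fun f => f 0%N) E.
move=> _ _ [t _ <-] [t' _ <-] ne.
have [i ti] : exists i, t i != t' i.
  case: (pselect (exists i, t i != t' i)) => // nE; exfalso; apply: ne.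
  congr h; apply/funext => i; apply/eqP; apply/negPn/negP => H; apply: nE; by exists i.
split.
- apply: (uncount_img (h := fun f => xx phi e0 e1 th (D (mk i (t i)) f))); last exact: diff.
  move=> f f' E; apply/funext => j.
  have E2 : xx phi e0 e1 th (D (mk i (t i)) f) (a ((mk i (t i)).+2 + j.*2)%N) =
    xx phi e0 e1 th (D (mk i (t i)) f') (a ((mk i (t i)).+2 + j.*2)%N) by rewrite E.
  by move: E2; rewrite !(xx_a ne01 nqp) !Dbit => /(b2X_inj ne01).
- exists (xx phi e0 e1 th (fun _ => false)); split; exact: om_LP (LP_zero _).
- exists (xx phi e0 e1 th (D 1 (fun _ => false))); split; last exact: not_per.
  exact: (om_LP (LP_pat t None _)).
Qed.

End Main.

Lemma scr_mono (Y : Type) (P Q : Y -> Y -> Prop) (S : set Y) :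
  (forall x y, P x y -> Q x y) -> scrambled_set P S -> scrambled_set Q S.
Proof. by move=> PQ [H1 H2]; split => // x y Sx Sy xy; apply: PQ; exact: H2. Qed.

Lemma u_to_inf (Y : topologicalType) (f : Y -> Y) x y :
  omega_u_scrambled_pair f x y -> omega_inf_scrambled_pair f x y.
Proof.
move=> [H1 H2 H3]; split => // fin; apply: H1; exact: finite_set_countable.
Qed.

Unset Implicit Arguments. Set Strict Implicit.

Theorem theorem3p7 (X : finType) (G : countType) (phi : G -> G)
  (hX : (1 < #|X|)%N) (g0 : G) :
  let P := exists theta : G, ~ quasi_periodic phi theta in
  let s := @gen_shift X G phi in
  [/\ P <-> omega_u_u_chaotic s,
      P <-> omega_u_inf_chaotic s,
      P <-> omega_u_2_chaotic s,
      P <-> omega_inf_inf_chaotic s &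
      P <-> omega_inf_2_chaotic s].
Proof.
move=> P s.
have [e0 [e1 [_ _ ne]]] := card_gt1P hX.
have PtoUU : P -> omega_u_u_chaotic s by move=> [th nqp]; exact: (fwd ne nqp).
have I2toP : omega_inf_2_chaotic s -> P.
  move=> H; case: (pselect P) => // nP; exfalso; apply: (rev_dir _ H) => th.
  case: (pselect (quasi_periodic phi th)) => // nq; exfalso; apply: nP; by exists th.
have UUUI : omega_u_u_chaotic s -> omega_u_inf_chaotic s.
  move=> [S [sc nc]]; exists S; split => // fin; apply: nc; exact: finite_set_countable.
have UIU2 : omega_u_inf_chaotic s -> omega_u_2_chaotic s by move=> [S [sc _]]; exists S.
have UIII : omega_u_inf_chaotic s -> omega_inf_inf_chaotic s.
  by move=> [S [sc inf]]; exists S; split => //; apply: scr_mono sc => x y; exact: u_to_inf.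
have U2I2 : omega_u_2_chaotic s -> omega_inf_2_chaotic s.
  by move=> [S sc]; exists S; apply: scr_mono sc => x y; exact: u_to_inf.
have III2 : omega_inf_inf_chaotic s -> omega_inf_2_chaotic s by move=> [S [sc _]]; exists S.
split; split; auto.
Qed.
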